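(* Let $\Phi\subset\mathbb{R}^m$ be compact, let $Q\in\mathbb{R}^{n\times n}$ be symmetric positive definite, and let $g:\mathbb{R}^n\to\mathbb{R}^s$, $h:\mathbb{R}^n\to\mathbb{R}^q$ be continuous functions defining convex constraints, so that the feasible set $\mathcal{C}=\{x\in\mathbb{R}^n: g(x)\le 0,\ h(x)=0\}$ is convex. For $v\in\mathbb{R}^n$ let $\Pi^Q_{\mathcal{C}}(v)=\operatorname{argmin}_{w\in\mathcal{C}}\|w-v\|_Q^2$, where $\|x\|_Q=\sqrt{x^\top Qx}$. Let $\{f_\theta:\Phi\to\mathbb{R}^n\}_\theta$ be a family of neural networks that is a universal approximator, i.e. for every continuous $u:\Phi\to\mathbb{R}^n$ and every $\epsilon>0$ there is $\theta$ with $\sup_{\phi\in\Phi}\|u(\phi)-f_\theta(\phi)\|<\epsilon$. Then for every continuous target function $u:\Phi\to\mathcal{C}$ and every $\epsilon>0$ there exist network parameters $\theta$ such that $$\sup_{\phi\in\Phi}\big\|u(\phi)-\Pi^Q_{\mathcal{C}}(f_\theta(\phi))\big\|<\epsilon.$$ That is, the composition $\hat f_\theta=\Pi^Q_{\mathcal{C}}\circ f_\theta:\Phi\to\mathcal{C}$ is a universal approximator for continuous constraint-satisfying mappings.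
   Context: In the paper's framework, $f_\theta(\phi)$ is the predicted mean $\mu_\theta(\phi)$ of a probabilistic model and $\Pi^Q_{\mathcal{C}}(f_\theta(\phi))$ is the projected (constrained) mean. *)

(* Defs.v *)
From HB Require Import structures.
From mathcomp Require Import all_boot all_order all_algebra.
From mathcomp Require Import all_classical all_reals all_analysis.
Set Implicit Arguments. Unset Strict Implicit. Unset Printing Implicit Defensive.
Import Order.TTheory GRing.Theory Num.Theory.
Import numFieldNormedType.Exports.
Local Open Scope classical_set_scope.
Local Open Scope ring_scope.

Definition enorm (R : realType) (n : nat) (x : 'cV[R]_n) : R :=
  Num.sqrt (\sum_(i < n) (x i 0) ^+ 2).

Definition qnorm (R : realType) (n : nat) (Q : 'M[R]_n) (x : 'cV[R]_n) : R :=
  Num.sqrt ((x^T *m Q *m x) 0 0).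

Definition sym_posdef (R : realType) (n : nat) (Q : 'M[R]_n) : Prop :=
  Q^T = Q /\ forall x : 'cV[R]_n, x != 0 -> 0 < (x^T *m Q *m x) 0 0.

Definition feasible (R : realType) (n s q : nat)
  (g : 'cV[R]_n -> 'cV[R]_s) (h : 'cV[R]_n -> 'cV[R]_q) : set 'cV[R]_n :=
  [set x | (forall i, g x i 0 <= 0) /\ h x = 0].

Definition convex_set_cV (R : realType) (n : nat) (C : set 'cV[R]_n) : Prop :=
  forall x y (t : R), C x -> C y -> 0 <= t <= 1 -> C (t *: x + (1 - t) *: y).

Definition is_Qproj (R : realType) (n : nat) (Q : 'M[R]_n) (C : set 'cV[R]_n)
  (v w : 'cV[R]_n) : Prop :=
  C w /\ forall w', C w' -> qnorm Q (w - v) ^+ 2 <= qnorm Q (w' - v) ^+ 2.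

(* Pi^Q_C(v) = argmin_{w in C} ||w - v||_Q^2 (a chosen minimizer; it exists
   and is unique when C is nonempty closed convex and Q is positive definite). *)
Definition Qproj (R : realType) (n : nat) (Q : 'M[R]_n) (C : set 'cV[R]_n)
  (v : 'cV[R]_n) : 'cV[R]_n :=
  xget 0 [set w | is_Qproj Q C v w].

(* sup_{phi in Phi} F phi, in the extended reals (-oo for empty Phi) *)
Definition supE (R : realType) (T : Type) (Phi : set T) (F : T -> R) : \bar R :=
  ereal_sup [set (F phi)%:E | phi in Phi].

(* Main.v *)
Require Import Defs.
From HB Require Import structures.
From mathcomp Require Import all_boot all_order all_algebra.
From mathcomp Require Import all_classical all_reals all_analysis.
From mathcomp Require Import ring lra.
Import Order.TTheory GRing.Theory Num.Theory.
Import numFieldNormedType.Exports.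
Local Open Scope classical_set_scope.
Local Open Scope ring_scope.
Section S.
Variable R : realType.

Lemma sum_cont (T : topologicalType) (I : finType) (F : I -> T -> R) :
  (forall i, continuous (F i)) -> continuous (fun x => \sum_i F i x).
Proof.
move=> Fc x; apply: (cvg_big add_continuous) => i _; exact: Fc.
Qed.

Lemma contM (T : topologicalType) (f g : T -> R) :
  continuous f -> continuous g -> continuous (fun x => f x * g x).
Proof. by move=> fc gc x; exact: (continuousM (fc x) (gc x)). Qed.

Lemma contB (T : topologicalType) (f g : T -> R) :
  continuous f -> continuous g -> continuous (fun x => f x - g x).
Proof. by move=> fc gc x; exact: (continuousB (fc x) (gc x)). Qed.

Lemma qf_cont n (Q : 'M[R]_n) (v : 'cV[R]_n) :
  continuous (fun x : 'cV[R]_n => \sum_j \sum_i (x i 0 - v i 0) * Q i j * (x j 0 - v j 0)).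
Proof.
apply: (@sum_cont _ _ (fun j (x : 'cV[R]_n) => \sum_i (x i 0 - v i 0) * Q i j * (x j 0 - v j 0))) => j.
apply: (@sum_cont _ _ (fun i (x : 'cV[R]_n) => (x i 0 - v i 0) * Q i j * (x j 0 - v j 0))) => i x.
apply: contM; [apply: contM|].
- by apply: contB; [exact: coord_continuous | exact: cst_continuous].
- exact: cst_continuous.
- by apply: contB; [exact: coord_continuous | exact: cst_continuous].
Qed.

Lemma trmx_cont n : continuous (fun x : 'rV[R]_n => x^T).
Proof.
move=> M s /= /(nbhs_ballP (M^T)) [e e0 es].
apply/nbhs_ballP; exists e => //= N [e0' MN]; apply: es; split => // i j.
rewrite !mxE; exact: MN.
Qed.

Lemma cV_compact n (A : set 'cV[R]_n) M :
  (forall x, A x -> forall i, `|x i 0| <= M) -> closed A -> compact A.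
Proof.
move=> AM Acl.
have Mco : compact [set v : 'rV[R]_n | forall i, `[-M, M]%classic (v ord0 i)].
  by apply: (@rV_compact _ _ (fun=> `[-M, M]%classic)) => _; exact: segment_compact.
have Bc : compact ((fun x : 'rV[R]_n => x^T) @^-1` A).
  apply: (subclosed_compact _ Mco).
    by apply: preimage_closed => // x _; exact: trmx_cont.
  move=> v /= Av i; have := AM _ Av i; rewrite mxE /= in_itv /= ler_norml => /andP[-> ->] //.
rewrite (_ : A = (fun x : 'rV[R]_n => x^T) @` ((fun x : 'rV[R]_n => x^T) @^-1` A)).
  apply: continuous_compact => //; apply: continuous_subspaceT; exact: trmx_cont.
apply/seteqP; split => [x Ax|x [y Ay <-] //].
by exists x^T => //=; rewrite trmxK.
Qed.

Definition bf n (Q : 'M[R]_n) (x y : 'cV[R]_n) : R := (x^T *m Q *m y) 0 0.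
Arguments bf {n}.

Lemma bfE n (Q : 'M[R]_n) x y :
  bf Q x y = \sum_j \sum_i (x i 0 * Q i j * y j 0).
Proof.
rewrite /bf mxE; apply: eq_bigr => j _; rewrite mxE mulr_suml.
by apply: eq_bigr => i _; rewrite mxE.
Qed.

Lemma bfDl n (Q : 'M[R]_n) x y z : bf Q (x + y) z = bf Q x z + bf Q y z.
Proof. by rewrite /bf linearD /= !mulmxDl mxE. Qed.

Lemma bfDr n (Q : 'M[R]_n) x y z : bf Q z (x + y) = bf Q z x + bf Q z y.
Proof. by rewrite /bf !mulmxDr mxE. Qed.

Lemma bfZl n (Q : 'M[R]_n) a x y : bf Q (a *: x) y = a * bf Q x y.
Proof. by rewrite /bf linearZ /= -!scalemxAl mxE. Qed.

Lemma bfZr n (Q : 'M[R]_n) a x y : bf Q x (a *: y) = a * bf Q x y.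
Proof. by rewrite /bf -!scalemxAr mxE. Qed.

Lemma bfC n (Q : 'M[R]_n) x y : Q^T = Q -> bf Q x y = bf Q y x.
Proof.
move=> QT; rewrite /bf.
have -> : (y^T *m Q *m x) 0 0 = ((y^T *m Q *m x)^T) 0 0 by rewrite [RHS]mxE.
by rewrite !trmx_mul trmxK QT mulmxA.
Qed.

Lemma bf0 n (Q : 'M[R]_n) : bf Q 0 0 = 0.
Proof. by rewrite /bf trmx0 !mul0mx mxE. Qed.

Lemma qf_ge0 n (Q : 'M[R]_n) x : sym_posdef Q -> 0 <= bf Q x x.
Proof.
move=> [_ Qp]; have [->|x0] := eqVneq x 0; first by rewrite bf0.
exact/ltW/Qp.
Qed.

Lemma qf_eq0 n (Q : 'M[R]_n) x : sym_posdef Q -> bf Q x x = 0 -> x = 0.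
Proof.
move=> [_ Qp] h; apply/eqP; apply: contraT => x0.
by have := Qp _ x0; rewrite -/(bf Q x x) h ltxx.
Qed.

Lemma qnorm_sq n (Q : 'M[R]_n) x : sym_posdef Q -> qnorm Q x ^+ 2 = bf Q x x.
Proof. by move=> Qp; rewrite /qnorm sqr_sqrtr //; exact: qf_ge0. Qed.

Lemma bf_expand n (Q : 'M[R]_n) a b : Q^T = Q ->
  bf Q (a + b) (a + b) = bf Q a a + 2 * bf Q a b + bf Q b b.
Proof.
move=> QT; rewrite bfDl !bfDr (bfC _ Q b a QT); ring.
Qed.

Lemma qfZ n (Q : 'M[R]_n) a x : bf Q (a *: x) (a *: x) = a ^+ 2 * bf Q x x.
Proof. by rewrite bfZl bfZr; ring. Qed.

Definition ss n (x : 'cV[R]_n) : R := \sum_i x i 0 ^+ 2.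
Arguments ss {n}.

Lemma ss_ge0 n (x : 'cV[R]_n) : 0 <= ss x.
Proof. by apply: sumr_ge0 => i _; exact: sqr_ge0. Qed.

Lemma ss_eq0 n (x : 'cV[R]_n) : ss x = 0 -> x = 0.
Proof.
move=> h; apply/matrixP => i j; rewrite ord1 mxE.
have := @psumr_eq0P _ _ _ _ (fun i _ => sqr_ge0 (x i 0)) h i isT.
by move/eqP; rewrite sqrf_eq0 => /eqP.
Qed.

Lemma ssZ n a (x : 'cV[R]_n) : ss (a *: x) = a ^+ 2 * ss x.
Proof.
rewrite /ss mulr_sumr; apply: eq_bigr => i _; rewrite mxE; ring.
Qed.

Lemma ss_coord n (x : 'cV[R]_n) i : x i 0 ^+ 2 <= ss x.
Proof.
rewrite /ss (bigD1 i) //= lerDl; apply: sumr_ge0 => j _; exact: sqr_ge0.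
Qed.

Lemma proj_var n (Q : 'M[R]_n) C v p u : sym_posdef Q -> convex_set_cV C ->
  is_Qproj Q C v p -> C u -> 0 <= bf Q (p - v) (u - p).
Proof.
move=> Qp Cc [Cp pmin] Cu.
have QT := Qp.1.
set a := bf Q (p - v) (u - p); set b := bf Q (u - p) (u - p).
have b0 : 0 <= b := qf_ge0 _ Q (u - p) Qp.
have key : forall t, 0 <= t <= 1 -> 0 <= 2 * t * a + t ^+ 2 * b.
  move=> t t01; have := pmin _ (Cc u p t Cu Cp t01).
  rewrite !qnorm_sq //.
  have -> : t *: u + (1 - t) *: p - v = (p - v) + t *: (u - p).
    by apply/matrixP => i j; rewrite !mxE; ring.
  rewrite (bf_expand _ Q (p - v) (t *: (u - p))) // bfZr qfZ -/a -/b; lra.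
rewrite leNgt; apply/negP => a0.
pose t := - a / (b - a).
have ba : 0 < b - a by lra.
have t0 : 0 < t by rewrite /t divr_gt0 //; lra.
have ht : t * (b - a) = - a by rewrite /t divfK // gt_eqF.
have t1 : t <= 1 by nra.
have := key t; rewrite (ltW t0) t1 => /(_ isT); nra.
Qed.

Lemma proj_nonexp n (Q : 'M[R]_n) C v p u : sym_posdef Q -> convex_set_cV C ->
  is_Qproj Q C v p -> C u -> bf Q (u - p) (u - p) <= bf Q (u - v) (u - v).
Proof.
move=> Qp Cc pP Cu; have QT := Qp.1.
have -> : u - v = (u - p) + (p - v) by apply/matrixP => i j; rewrite !mxE; ring.
rewrite (bf_expand _ Q (u - p) (p - v)) // (bfC _ _ (u - p) (p - v) QT).
have := proj_var _ _ _ _ _ _ Qp Cc pP Cu; have := qf_ge0 _ Q (p - v) Qp; lra.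
Qed.
Lemma bf_cont n (Q : 'M[R]_n) v : continuous (fun x : 'cV[R]_n => bf Q (x - v) (x - v)).
Proof.
have -> : (fun x : 'cV[R]_n => bf Q (x - v) (x - v)) =
   (fun x => \sum_j \sum_i (x i 0 - v i 0) * Q i j * (x j 0 - v j 0)).
  apply/funext => x; rewrite bfE; apply: eq_bigr => j _; apply: eq_bigr => i _.
  by rewrite !mxE.
exact: qf_cont.
Qed.

Lemma ss_cont n : continuous (fun x : 'cV[R]_n => ss x).
Proof.
have -> : (fun x : 'cV[R]_n => ss x) = (fun x => \sum_i x i 0 * x i 0).
  by apply/funext => x; apply: eq_bigr => i _; rewrite expr2.
apply: (@sum_cont _ _ (fun i (x : 'cV[R]_n) => x i 0 * x i 0)) => i.
by apply: contM; exact: coord_continuous.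
Qed.

Lemma sq_le_abs (y c : R) : 0 <= c -> y ^+ 2 <= c -> `|y| <= 1 + c.
Proof. move=> c0 h; rewrite ler_norml; apply/andP; split; nra. Qed.

Lemma ss_scale n (x : 'cV[R]_n) : 0 < ss x ->
  exists w, ss (w *: x) = 1 /\ w ^+ 2 * ss x = 1.
Proof.
move=> sx; exists (Num.sqrt (ss x))^-1; rewrite ssZ.
suff h : (Num.sqrt (ss x))^-1 ^+ 2 * ss x = 1 by [].
by rewrite exprVn sqr_sqrtr ?(ltW sx) // mulVf // gt_eqF.
Qed.

Lemma qf_bounds n (Q : 'M[R]_n) : sym_posdef Q -> exists k K : R,
  [/\ 0 < k, 0 < K & forall x, k * ss x <= bf Q x x /\ bf Q x x <= K * ss x].
Proof.
move=> Qp.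
pose S := [set x : 'cV[R]_n | ss x = 1].
pose f := fun x : 'cV[R]_n => bf Q (x - 0) (x - 0).
have fE x : f x = bf Q x x by rewrite /f subr0.
have Scl : closed S.
  apply: (@preimage_closed _ _ (fun x : 'cV[R]_n => ss x) [set y | y = 1]).
    by move=> x _; exact: ss_cont.
  exact: closed_eq.
have Sco : compact S.
  apply: (@cV_compact n S (1 + 1)) => // x Sx i.
  by apply: sq_le_abs => //; rewrite -Sx; exact: ss_coord.
have fc : {within S, continuous f} by apply: continuous_subspaceT; exact: bf_cont.
have ss0 x : ss x = 0 -> bf Q x x = 0 by move/ss_eq0 ->; exact: bf0.
case: (pselect (S !=set0)) => [Sne|Se]; last first.
  exists 1, 1; split => // x.
  have [s0|sx] := eqVneq (ss x) 0; first by rewrite s0 ss0 // mulr0; split.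
  have spos : 0 < ss x by rewrite lt_neqAle eq_sym sx ss_ge0.
  have [w [Sw _]] := ss_scale _ _ spos.
  by exfalso; apply: Se; exists (w *: x).
have [c cS cmin] := compact_EVT_min Sne Sco fc.
have [d dS dmax] := compact_EVT_max Sne Sco fc.
move: cS dS; rewrite !inE => cS dS.
have c0 : c != 0 by apply/eqP => c0; move: cS; rewrite /S /= c0 /ss big1 => [|i _]; rewrite ?mxE ?expr0n //=; move/eqP; rewrite eq_sym oner_eq0.
have kpos : 0 < f c by rewrite fE; exact: Qp.2.
have kK : f c <= f d by apply: dmax; rewrite inE.
exists (f c), (f d); split => //; first exact: lt_le_trans kK.
move=> x.
have [s0|sx] := eqVneq (ss x) 0; first by rewrite s0 ss0 // !mulr0; split.
have spos : 0 < ss x by rewrite lt_neqAle eq_sym sx ss_ge0.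
have [w [Sw hw]] := ss_scale _ _ spos.
have h1 := cmin (w *: x); have h2 := dmax (w *: x).
rewrite inE in h1 h2; move/(_ Sw): h1 => h1; move/(_ Sw): h2 => h2.
rewrite !fE !qfZ in h1 h2.
set B := bf Q x x in h1 h2 *; set s := ss x in hw spos *.
split.
  by rewrite fE; apply: le_trans (ler_wpM2r (ltW spos) h1) _; rewrite mulrAC hw mul1r.
rewrite fE -{1}[B]mul1r -hw mulrAC; apply: ler_wpM2r => //; exact: ltW.
Qed.
Lemma proj_exists n (Q : 'M[R]_n) (C : set 'cV[R]_n) v c0 :
  sym_posdef Q -> closed C -> C c0 -> exists p, is_Qproj Q C v p.
Proof.
move=> Qp Ccl Cc0.
have [k [K [k0 K0 kb]]] := qf_bounds _ _ Qp.
pose r := bf Q (c0 - v) (c0 - v).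
pose Kset := C `&` [set w | bf Q (w - v) (w - v) <= r].
have Kcl : closed Kset.
  apply: closedI => //.
  rewrite (_ : [set w | _ <= r] = (fun w : 'cV[R]_n => bf Q (w - v) (w - v)) @^-1` [set y : R | y <= r]) //.
  apply: preimage_closed.
    by move=> w _; exact: bf_cont.
  exact: closed_le.
have r0 : 0 <= r / k by rewrite divr_ge0 ?(ltW k0) //; exact: qf_ge0.
have Kco : compact Kset.
  apply: (@cV_compact n Kset (\sum_j `|v j 0| + (1 + r / k))) => // w [_ wr] i.
  have hi : (w - v) i 0 ^+ 2 <= r / k.
    apply: le_trans (ss_coord _ _ i) _.
    rewrite ler_pdivlMr // mulrC; apply: le_trans wr; exact: (kb (w - v)).1.
  have := sq_le_abs _ _ r0 hi; rewrite mxE => h.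
  have vi : `|v i 0| <= \sum_j `|v j 0|.
    by rewrite (bigD1 i) //= lerDl sumr_ge0.
  have e : w i 0 = v i 0 + (w i 0 - v i 0) by ring.
  rewrite mxE in h; have := ler_normD (v i 0) (w i 0 - v i 0); rewrite -e.
  move: h vi; set a := `|w i 0| ; set b := `|w i 0 - v i 0|; set c := `|v i 0|.
  move=> h vi h2; exact: (le_trans h2 (lerD vi h)).
have Kne : Kset !=set0 by exists c0; split => //=.
have fc : {within Kset, continuous (fun w => bf Q (w - v) (w - v))}.
  by apply: continuous_subspaceT; exact: bf_cont.
have [p pK pmin] := compact_EVT_min Kne Kco fc.
rewrite inE in pK; case: pK => Cp pr.
exists p; split => // w' Cw'; rewrite !qnorm_sq //.
have [wr|wr] := leP (bf Q (w' - v) (w' - v)) r.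
  by apply: pmin; rewrite inE; split.
exact: le_trans pr (ltW wr).
Qed.
Lemma feasible_closed n s q (g : 'cV[R]_n -> 'cV[R]_s) (h : 'cV[R]_n -> 'cV[R]_q) :
  continuous g -> continuous h -> closed (feasible g h).
Proof.
move=> gc hc.
have -> : feasible g h = (\bigcap_(i in [set: 'I_s])
    (g @^-1` [set y : 'cV[R]_s | y i 0 <= 0])) `&` (h @^-1` [set 0]).
  apply/seteqP; split => x /=.
    by move=> [gx hx]; split => // i _; exact: gx.
  by move=> [gx hx]; split => // i; exact: gx.
apply: closedI.
  apply: closed_bigI => i _; apply: preimage_closed => [x _|]; first exact: gc.
  rewrite (_ : [set y : 'cV[R]_s | y i 0 <= 0] = (fun y : 'cV[R]_s => y i 0) @^-1` [set z : R | z <= 0]) //.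
  apply: preimage_closed => [y _|]; [exact: coord_continuous | exact: closed_le].
apply: preimage_closed => [x _|]; first exact: hc.
apply: accessible_closed_set1; apply: hausdorff_accessible; exact: norm_hausdorff.
Qed.
End S.

Arguments ss {R n}.
Arguments bf {R n}.

Theorem theorem2 (R : realType) (m n s q : nat) (Phi : set 'cV[R]_m)
  (Q : 'M[R]_n) (g : 'cV[R]_n -> 'cV[R]_s) (h : 'cV[R]_n -> 'cV[R]_q)
  (Theta : Type) (f : Theta -> 'cV[R]_m -> 'cV[R]_n) :
  compact Phi ->
  sym_posdef Q ->
  continuous g -> continuous h ->
  convex_set_cV (feasible g h) ->
  (forall u : 'cV[R]_m -> 'cV[R]_n, {within Phi, continuous u} ->
     forall eps : R, 0 < eps ->
     exists theta, (supE Phi (fun phi => enorm (u phi - f theta phi)) < eps%:E)%E) ->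
  forall u : 'cV[R]_m -> 'cV[R]_n, {within Phi, continuous u} ->
  (forall phi, Phi phi -> feasible g h (u phi)) ->
  forall eps : R, 0 < eps ->
  exists theta,
    (supE Phi (fun phi => enorm (u phi - Qproj Q (feasible g h) (f theta phi))) < eps%:E)%E.
Proof.
move=> _ Qp gc hc Cc univ u uc uC eps e0.
have Ccl := feasible_closed _ _ _ _ _ _ gc hc.
have [k [K [k0 K0 kb]]] := qf_bounds _ _ _ Qp.
pose c := K / k.
have c0 : 0 <= c by rewrite /c divr_ge0 // ltW.
pose eta := eps / (2 * (c + 1)).
have eta0 : 0 < eta by rewrite /eta divr_gt0 // mulr_gt0 //; lra.
have heta : eta * (c + 1) = eps / 2.
  by rewrite /eta; field; rewrite gt_eqF //; lra.
have [theta Ht] := univ u uc eta eta0.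
exists theta.
suff H : forall phi, Phi phi ->
    enorm (u phi - Qproj Q (feasible g h) (f theta phi)) <= eps / 2.
  apply: (@le_lt_trans _ _ (eps / 2)%:E); last by rewrite lte_fin; lra.
  by apply: ge_ereal_sup => _ [phi Pphi <-]; rewrite lee_fin; exact: H.
move=> phi Pphi.
set v := f theta phi.
have hv : enorm (u phi - v) < eta.
  have h1 : ((enorm (u phi - v))%:E <=
      supE Phi (fun phi => enorm (u phi - f theta phi)))%E.
    by apply: ereal_sup_ubound; exists phi.
  by have := le_lt_trans h1 Ht; rewrite lte_fin.
have [p pP] := proj_exists _ _ _ _ v _ Qp Ccl (uC phi Pphi).
have Pp : is_Qproj Q (feasible g h) v (Qproj Q (feasible g h) v).
  exact: (xgetPex 0 (ex_intro _ p pP)).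
set P := Qproj Q (feasible g h) v.
have ne := proj_nonexp _ _ _ _ _ _ _ Qp Cc Pp (uC phi Pphi).
have eE x : enorm x ^+ 2 = ss x by rewrite /enorm sqr_sqrtr //; exact: ss_ge0.
have hk := (kb (u phi - P)).1; have hK := (kb (u phi - v)).2.
rewrite -!eE in hk hK.
have a0 := sqrtr_ge0 (ss (u phi - v)).
have b0 := sqrtr_ge0 (ss (u phi - P)).
rewrite -/(enorm _) in a0 b0 *.
set a := enorm (u phi - v) in hv hK a0.
set b := enorm (u phi - P) in hk b0 *.
have hb2 : b ^+ 2 <= c * a ^+ 2.
  rewrite /c mulrAC ler_pdivlMr // mulrC.
  exact: le_trans hk (le_trans ne hK).
have ha2 : a ^+ 2 <= eta ^+ 2 by nra.
nra.
Qed.
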